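(* Let $H$ be a graph and $(G,\sigma)$ a signed graph. Then $\tilde H$ is a topological minor of $(G,\sigma)$ if and only if $\tilde H$ is a total topological minor of $(G,\sigma)$.
   Context: A signed graph $(G,\sigma)$ is a graph (loops and parallel edges allowed) with a signature $\sigma:E(G)\to\{+,-\}$; the sign of a path or cycle is the product of the signs of its edges. For a graph $H$, $\tilde H$ is the signed graph obtained by replacing each edge of $H$ by two parallel edges, one positive and one negative. A signed graph $(H,\pi)$ is a topological minor of $(G,\sigma)$ if (i) some subdivision of $H$ is isomorphic to a subgraph $G_1$ of $G$, and (ii) for every cycle $C$ of $(H,\pi)$, the image of $C$ in $G_1$ has in $(G,\sigma)$ the same sign as $C$ has in $(H,\pi)$. It is a total topological minor if (i) holds and (ii') for every edge $e$ of $H$, the path $P_e$ representing $e$ in $G_1$ has sign $\pi(e)$ in $(G,\sigma)$. *)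

(* Defs.v *)
From mathcomp Require Import all_boot.
Set Implicit Arguments.
Unset Strict Implicit.
Unset Printing Implicit Defensive.

(* A (multi)graph, loops and parallel edges allowed, is given by a finite
   vertex type V, a finite edge type E and an endpoint map ends : E -> V * V
   (the order of the two endpoints is irrelevant; ends e = (x, x) is a loop).
   A signature is a map E -> bool, where [true] stands for the sign "-" and
   [false] for "+".  The sign of a set/sequence of edges (product of signs in
   {+,-}) is thus the xor (sum in Z/2) of the boolean signs. *)

Section Graphs.
Variables (V E : finType) (ends : E -> V * V).

Definition joins (e : E) (x y : V) : bool :=
  let: (a, b) := ends e in ((a == x) && (b == y)) || ((a == y) && (b == x)).

(* walk_from x es xs : starting at x, traverse edges es, visiting the
   vertices xs (xs has one vertex per edge; the walk ends at last x xs). *)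
Fixpoint walk_from (x : V) (es : seq E) (xs : seq V) : bool :=
  match es, xs with
  | [::], [::] => true
  | e :: es', y :: xs' => joins e x y && walk_from y es' xs'
  | _, _ => false
  end.

(* C is (the edge set of) a cycle: a closed walk of length >= 1 with no
   repeated edges and no repeated vertices (loops are cycles of length 1,
   two parallel edges form a cycle of length 2). *)
Definition is_cycle (C : {set E}) : Prop :=
  exists (x : V) (es : seq E) (xs : seq V),
    [&& es != [::], walk_from x es xs, last x xs == x, uniq es, uniq xs
      & C == [set e in es]].

End Graphs.

Section Embedding.
Variables (VH EH : finType) (endsH : EH -> VH * VH).
Variables (VG EG : finType) (endsG : EG -> VG * VG).

(* Data of a subdivision of H inside G: vertex map f, and for each edge e
   of H a path P_e in G, given by its edges pe e and the vertices pv e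
   visited after its start vertex. *)
Definition interior (s : seq VG) : seq VG := take (size s).-1 s.

Definition path_rep (f : VH -> VG) (pv : EH -> seq VG) (pe : EH -> seq EG)
  (e : EH) : bool :=
  let: (u, v) := endsH e in
  [&& pe e != [::], walk_from endsG (f u) (pe e) (pv e),
      last (f u) (pv e) == f v, uniq (pe e)
    & if u == v then uniq (pv e) else uniq (f u :: pv e)].

Definition subdivision_embedding (f : VH -> VG) (pv : EH -> seq VG)
  (pe : EH -> seq EG) : Prop :=
  [/\ injective f,
      (forall e, path_rep f pv pe e),
      (forall e x w, x \in interior (pv e) -> x != f w)
    & (forall e e', e != e' ->
         (forall x, x \in interior (pv e) -> x \notin interior (pv e')) /\
         (forall g, g \in pe e -> g \notin pe e'))].

Variables (piH : EH -> bool) (sigG : EG -> bool).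

Definition seq_sign (s : seq EG) : bool := \big[addb/false]_(g <- s) sigG g.
Definition setG_sign (S : {set EG}) : bool := \big[addb/false]_(g in S) sigG g.
Definition setH_sign (S : {set EH}) : bool := \big[addb/false]_(e in S) piH e.

Definition image_edges (pe : EH -> seq EG) (C : {set EH}) : {set EG} :=
  \bigcup_(e in C) [set g in pe e].

Definition topological_minor : Prop :=
  exists f pv pe, subdivision_embedding f pv pe /\
    forall C : {set EH}, is_cycle endsH C ->
      setG_sign (image_edges pe C) = setH_sign C.

Definition total_topological_minor : Prop :=
  exists f pv pe, subdivision_embedding f pv pe /\
    forall e : EH, seq_sign (pe e) = piH e.

End Embedding.

(* \tilde H: each edge of H doubled into a positive and a negative copy. *)
Section Tilde.
Variables (V E : finType) (ends : E -> V * V).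
Definition tilde_ends (p : E * bool) : V * V := ends p.1.
Definition tilde_sign (p : E * bool) : bool := p.2.
End Tilde.

(* Main.v *)
Require Import Defs.
From mathcomp Require Import all_boot.
Set Implicit Arguments.
Unset Strict Implicit.
Unset Printing Implicit Defensive.

Section L.
Variables (EH EG : finType) (sigG : EG -> bool) (pe : EH -> seq EG).
Hypothesis uniqpe : forall e, uniq (pe e).
Hypothesis disj : forall e e', e != e' -> forall g, g \in pe e -> g \notin pe e'.

Lemma set_sign_seq e : \big[addb/false]_(g in [set g in pe e]) sigG g = seq_sign sigG (pe e).
Proof.
rewrite /seq_sign big_uniq //; apply: eq_bigl => g; by rewrite inE.
Qed.

Lemma image_sign (C : {set EH}) :
  \big[addb/false]_(g in \bigcup_(e in C) [set g in pe e]) sigG g =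
  \big[addb/false]_(e in C) seq_sign sigG (pe e).
Proof.
pose F e := if e \in C then [set g in pe e] else set0.
have -> : \bigcup_(e in C) [set g in pe e] = \bigcup_e F e by rewrite big_mkcond.
rewrite partition_disjoint_bigcup.
  rewrite [RHS]big_mkcond /=; apply: eq_bigr => e _; rewrite /F.
  case: (e \in C); last by rewrite big_set0.
  exact: set_sign_seq.
move=> i j ij; rewrite disjoint_subset; apply/subsetP => g; rewrite /F.
by case: (i \in C); case: (j \in C); rewrite !inE // => gi; exact: (disj ij gi).
Qed.
End L.

Section M.
Variables (VH EH : finType) (endsH : EH -> VH * VH)
  (VG EG : finType) (endsG : EG -> VG * VG) (sigma : EG -> bool).

Lemma loop_cycle e u b : endsH e = (u, u) ->
  is_cycle (tilde_ends endsH) [set (e, b)].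
Proof.
move=> E; exists u, [:: (e, b)], [:: u].
rewrite /= /joins /tilde_ends /= E eqxx /=.
by apply/eqP/setP => x; rewrite !inE.
Qed.

Lemma two_cycle e u v : endsH e = (u, v) -> u != v ->
  is_cycle (tilde_ends endsH) [set (e, false); (e, true)].
Proof.
move=> E uv; exists u, [:: (e, false); (e, true)], [:: v; u].
rewrite /= /joins /tilde_ends /= E !eqxx /= !inE andbT orbT /=.
rewrite (eq_sym v) uv xpair_eqE eqxx /=.
by apply/eqP/setP => x; rewrite !inE.
Qed.

Lemma pr_uniq f pv pe p :
  path_rep (tilde_ends endsH) endsG f pv pe p -> uniq (pe p).
Proof.
rewrite /path_rep; case: (tilde_ends endsH p) => u v.
by case/and5P.
Qed.

End M.

Theorem mainTheorem4 (VH EH : finType) (endsH : EH -> VH * VH)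
  (VG EG : finType) (endsG : EG -> VG * VG) (sigma : EG -> bool) :
  topological_minor (tilde_ends endsH) endsG (@tilde_sign EH) sigma <->
  total_topological_minor (tilde_ends endsH) endsG (@tilde_sign EH) sigma.
Proof.
split.
- case=> f [pv [pe [[inj pr intr dsj] Hc]]].
  have uq p : uniq (pe p) by exact: pr_uniq (pr p).
  have dj p p' : p != p' -> forall g, g \in pe p -> g \notin pe p'.
    by move=> pp; case: (dsj p p' pp).
  have key C : is_cycle (tilde_ends endsH) C ->
      \big[addb/false]_(p in C) seq_sign sigma (pe p) = setH_sign (@tilde_sign EH) C.
    by move=> cC; rewrite -Hc // /setG_sign /image_edges image_sign.
  pose s e := seq_sign sigma (pe (e, false)).
  have sgn e b : seq_sign sigma (pe (e, b (+) s e)) = b.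
    case E: (endsH e) => [u v].
    have loopc b' : u = v -> seq_sign sigma (pe (e, b')) = b'.
      move=> uv; subst v.
      have := key _ (loop_cycle b' E); rewrite /setH_sign (big_pred1 (e, b')); last by move=> x; rewrite !inE.
      by rewrite (big_pred1 (e, b')) //= => x; rewrite !inE.
    case: (eqVneq u v) => uv.
      have : s e = false by rewrite /s loopc.
      by move->; rewrite addbF loopc.
    have := key _ (two_cycle E uv).
    have nin : (e, false) \notin [set (e, true)] by rewrite inE xpair_eqE andbF.
    rewrite /setH_sign !(big_setU1 _ nin).
    rewrite (big_pred1 (e, true)); last by move=> x; rewrite !inE.
    rewrite (big_pred1 (e, true)); last by move=> x; rewrite !inE.
    rewrite /s /=; case E0: (seq_sign sigma (pe (e, false))); case: b => /=;
      try by [].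
    by move/negbTE.
  pose sg (p : EH * bool) := (p.1, p.2 (+) s p.1).
  have sginj : injective sg.
    by case=> [e b] [e' b'] /= [<-] /(congr1 (addb^~ (s e))); rewrite -!addbA addbb !addbF => ->.
  exists f, (fun p => pv (sg p)), (fun p => pe (sg p)); split; last first.
    by case=> e b; rewrite /= sgn.
  split => //.
  + by case=> e b; exact: (pr (sg (e, b))).
  + by move=> p x w; exact: intr.
  + move=> p p' pp; apply: dsj.
    by apply: contra pp => /eqP /sginj ->.
- case=> f [pv [pe [[inj pr intr dsj] Hs]]].
  exists f, pv, pe; split; first by split.
  move=> C _.
  have uq p : uniq (pe p) by exact: pr_uniq (pr p).
  have dj p p' : p != p' -> forall g, g \in pe p -> g \notin pe p'.
    by move=> pp; case: (dsj p p' pp).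
  rewrite /setG_sign /image_edges image_sign // /setH_sign.
  by apply: eq_bigr => p _; rewrite Hs.
Qed.
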